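(* For a topological space $(X,\tau)$ the following are equivalent: (1) for every compact subset $F$ of $X$ and every $y\notin F$ there exists a set $A_y$ with $F\subseteq A_y$ and $y\notin A_y$ such that $A_y$ is either open or closed; (2) $X$ is $T_{\frac13}$, i.e. every compact subset of $X$ is $\lambda$-closed.
   Context: A $\Lambda$-set is an intersection of a family of open sets. A set $A$ is $\lambda$-closed if $A=L\cap C$ with $L$ a $\Lambda$-set and $C$ closed. *)

(* Defs.v *)
From HB Require Import structures.
From mathcomp Require Import all_boot all_order all_algebra.
From mathcomp Require Import all_classical all_reals all_analysis.
Set Implicit Arguments. Unset Strict Implicit. Unset Printing Implicit Defensive.
Local Open Scope classical_set_scope.

Definition Lambda_set (T : topologicalType) (L : set T) : Prop :=
  exists Fam : set (set T),
    (forall U, Fam U -> open U) /\ L = \bigcap_(U in Fam) U.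

Definition lambda_closed (T : topologicalType) (A : set T) : Prop :=
  exists L C : set T, Lambda_set L /\ closed C /\ A = L `&` C.

Definition T_one_third (T : topologicalType) : Prop :=
  forall F : set T, compact F -> lambda_closed F.

(* Main.v *)
Require Import Defs.
From HB Require Import structures.
From mathcomp Require Import all_boot all_order all_algebra.
From mathcomp Require Import all_classical all_reals all_analysis.
Local Open Scope classical_set_scope.

Theorem mainTheorem9 (T : topologicalType) :
  (forall (F : set T) (y : T), compact F -> ~ F y ->
     exists A : set T, F `<=` A /\ ~ A y /\ (open A \/ closed A))
  <-> T_one_third T.
Proof.
split.
- move=> H F cF.
  exists (\bigcap_(U in [set U : set T | open U /\ F `<=` U]) U), (closure F).
  split; first by exists [set U : set T | open U /\ F `<=` U]; split => // U [].
  split; first exact: closed_closure.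
  apply/seteqP; split.
  + move=> x Fx; split; last exact: subset_closure.
    by move=> U [_ FU]; apply: FU.
  + move=> x [Lx Cx]; apply/not_notP => nFx.
    have [A [FA [nAx [oA|cA]]]] := H F x cF nFx.
    * by apply: nAx; apply: Lx.
    * apply: nAx; move: Cx; rewrite closureE; apply: smallest_sub => //.
- move=> H3 F y cF nFy.
  have [L [C [[Fam [oFam ->]] [cC FE]]]] := H3 F cF.
  have [Cy|nCy] := pselect (C y).
  + have [U FamU nUy] : exists2 U, Fam U & ~ U y.
      apply/not_notP => nex; apply: nFy; rewrite FE; split => //.
      move=> U FamU; apply/not_notP => nUy; apply: nex; by exists U.
    exists U; split; last by split => //; left; apply: oFam.
    by rewrite FE => x [Lx _]; apply: Lx.
  + exists C; split; first by rewrite FE => x [].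
    by split => //; right.
Qed.
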